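(* Let $X$ be a complex K3 surface, let $K_{\mathrm{num}}(X)$ be its numerical Grothendieck group equipped with the Mukai pairing $(\,,\,)$, and let $s=v(\mathcal{E})$ be the Mukai vector of a spherical object $\mathcal{E}\in D^b(X)$. Let $s^\perp_+\subset K_{\mathrm{num}}(X)\otimes\mathbb{R}$ be the set of classes $v$ with $(v,s)=0$ and $v^2>0$. Then, up to rescaling, the set of integral classes $v\in s^\perp_+$ such that $2v^2$ is not a square is dense in $s^\perp_+$; that is, the set of positive real multiples of such integral classes is dense in $s^\perp_+$.
   Context: $K_{\mathrm{num}}(X)$ is identified with the algebraic Mukai lattice $H^0(X,\mathbb{Z})\oplus\mathrm{NS}(X)\oplus H^4(X,\mathbb{Z})$ via the Mukai vector $v(E)=\mathrm{ch}(E)\sqrt{\mathrm{td}(X)}$, with pairing $((r_1,c_1,m_1),(r_2,c_2,m_2))=c_1c_2-r_1m_2-r_2m_1$; it has signature $(2,\rho)$ where $\rho$ is the Picard rank. A spherical object satisfies $\mathbf{R}\mathrm{Hom}(\mathcal{E},\mathcal{E})\cong\mathbb{C}\oplus\mathbb{C}[-2]$; $v^2$ means $(v,v)$; ''square'' means square of an integer. *)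

(* Defs.v *)
From HB Require Import structures.
From mathcomp Require Import all_boot all_order all_algebra.
From mathcomp Require Import reals.
Set Implicit Arguments. Unset Strict Implicit. Unset Printing Implicit Defensive.
Import Order.TTheory GRing.Theory Num.Theory.
Local Open Scope ring_scope.

(* Algebraic Mukai lattice H^0 ⊕ NS(X) ⊕ H^4 with NS(X) = Z^n carrying the
   intersection form given by the Gram matrix G. *)
Definition mvec (T : Type) (n : nat) := (T * 'rV[T]_n * T)%type.

Definition mrank {T n} (v : mvec T n) : T := v.1.1.
Definition mdiv {T n} (v : mvec T n) : 'rV[T]_n := v.1.2.
Definition mdeg {T n} (v : mvec T n) : T := v.2.

Definition mukai {T : comRingType} {n} (G : 'M[T]_n) (v w : mvec T n) : T :=
  (mdiv v *m G *m (mdiv w)^T) 0 0 - mrank v * mdeg w - mrank w * mdeg v.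

Definition mreal (R : realType) {n} (v : mvec int n) : mvec R n :=
  ((mrank v)%:~R, map_mx (fun z : int => z%:~R) (mdiv v), (mdeg v)%:~R).

Definition mscale (R : realType) {n} (a : R) (v : mvec R n) : mvec R n :=
  (a * mrank v, a *: mdiv v, a * mdeg v).

(* coordinatewise eps-closeness (product topology on R^(n+2)) *)
Definition mclose (R : realType) {n} (eps : R) (v w : mvec R n) : Prop :=
  [/\ `|mrank v - mrank w| < eps,
      forall i, `|mdiv v 0 i - mdiv w 0 i| < eps
    & `|mdeg v - mdeg w| < eps].

(* NS(X) has signature (1, n-1): the Gram matrix is congruent over R to
   diag(1, -1, ..., -1). *)
Definition hyperbolic_signature (R : realType) {n} (G : 'M[int]_n) : Prop :=
  exists P : 'M[R]_n, P \in unitmx /\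
    P *m map_mx (fun z : int => z%:~R) G *m P^T
    = diag_mx (\row_(i < n) (if val i == 0%N then 1 else -1)).

Definition even_lattice {n} (G : 'M[int]_n) : Prop :=
  G^T = G /\ forall i, (2 %| G i i)%Z.

Definition is_int_square (z : int) : Prop := exists k : int, z = k ^+ 2.

(* Main.v *)
Require Import Defs.
From HB Require Import structures.
From mathcomp Require Import all_boot all_order all_algebra.
From mathcomp Require Import reals.
From mathcomp Require Import ring lra zify.
From Stdlib Require Import Classical_Prop.
Import Order.TTheory GRing.Theory Num.Theory.
Set Implicit Arguments. Unset Strict Implicit. Unset Printing Implicit Defensive.
Local Open Scope ring_scope.

Section Gen.
Variable T : comNzRingType.
Variable n : nat.
Implicit Types (v w z : mvec T n) (G : 'M[T]_n).

Definition madd v w : mvec T n := (mrank v + mrank w, mdiv v + mdiv w, mdeg v + mdeg w).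
Definition msc (a : T) v : mvec T n := (a * mrank v, a *: mdiv v, a * mdeg v).

Lemma mukaiDl G v w z : mukai G (madd v w) z = mukai G v z + mukai G w z.
Proof. rewrite /mukai /madd /mrank /mdiv /mdeg /= !mulmxDl !mxE. ring. Qed.
Lemma mukaiDr G v w z : mukai G z (madd v w) = mukai G z v + mukai G z w.
Proof. rewrite /mukai /madd /mrank /mdiv /mdeg /= linearD /= mulmxDr !mxE. ring. Qed.
Lemma mukaiZl G a v z : mukai G (msc a v) z = a * mukai G v z.
Proof. rewrite /mukai /msc /mrank /mdiv /mdeg /= -!scalemxAl !mxE. ring. Qed.
Lemma mukaiZr G a v z : mukai G z (msc a v) = a * mukai G z v.
Proof. rewrite /mukai /msc /mrank /mdiv /mdeg /= linearZ /= -scalemxAr !mxE. ring. Qed.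
Lemma mukaiC G v w : G^T = G -> mukai G v w = mukai G w v.
Proof.
move=> sG; rewrite /mukai.
have -> : (mdiv v *m G *m (mdiv w)^T) 0 0 = ((mdiv v *m G *m (mdiv w)^T)^T) 0 0 by rewrite [RHS]mxE.
rewrite !trmx_mul trmxK sG mulmxA. ring.
Qed.
End Gen.
Inductive cidx (n : nat) := CR | CD of 'I_n | CM.
Arguments CR {n}. Arguments CM {n}.
Definition coord {T : Type} {n} (v : mvec T n) (k : cidx n) : T :=
  match k with CR => mrank v | CD i => mdiv v 0 i | CM => mdeg v end.

Lemma coord_add (T : comNzRingType) n (v w : mvec T n) k :
  coord (madd v w) k = coord v k + coord w k.
Proof. by case: k => [|i|] //=; rewrite mxE. Qed.
Lemma coord_sc (T : comNzRingType) n (a : T) (v : mvec T n) k :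
  coord (msc a v) k = a * coord v k.
Proof. by case: k => [|i|] //=; rewrite mxE. Qed.
Lemma coord_real (R : realType) n (v : mvec int n) k :
  coord (mreal R v) k = (coord v k)%:~R.
Proof. by case: k => [|i|] //=; rewrite mxE. Qed.

Lemma mcloseP (R : realType) n (eps : R) (v w : mvec R n) :
  (forall k, `|coord v k - coord w k| < eps) -> mclose eps v w.
Proof. move=> h; split; [exact: (h CR)| move=> i; exact: (h (CD i)) | exact: (h CM)]. Qed.

Lemma mukai_mreal (R : realType) n (G : 'M[int]_n) (v w : mvec int n) :
  mukai (map_mx (fun z : int => z%:~R) G) (mreal R v) (mreal R w) = (mukai G v w)%:~R.
Proof.
rewrite /mukai /mreal /mrank /mdiv /mdeg /=.
rewrite map_trmx -!map_mxM mxE.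
by rewrite rmorphB rmorphB !rmorphM.
Qed.

Definition Cg (R : realType) n (G : 'M[R]_n) : R := \sum_j \sum_i `|G i j| + 2.

Lemma Cg_ge2 (R : realType) n (G : 'M[R]_n) : 2 <= Cg G.
Proof.
rewrite /Cg lerDr; apply: sumr_ge0 => j _; apply: sumr_ge0 => i _; exact: normr_ge0.
Qed.

Lemma mukai_bound (R : realType) n (G : 'M[R]_n) (a b : mvec R n) (al be : R) :
  0 <= al -> 0 <= be ->
  (forall k, `|coord a k| <= al) -> (forall k, `|coord b k| <= be) ->
  `|mukai G a b| <= Cg G * al * be.
Proof.
move=> al0 be0 ha hb.
rewrite /mukai /Cg.
have hS : `|(mdiv a *m G *m (mdiv b)^T) 0 0| <= (\sum_j \sum_i `|G i j|) * al * be.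
  rewrite mxE (le_trans (ler_norm_sum _ _ _)) // -mulrA mulr_suml.
  apply: ler_sum => j _; rewrite mxE normrM mulr_suml.
  rewrite (le_trans (ler_pM _ _ (ler_norm_sum _ _ _) (le_refl _))) //.
  rewrite mulr_suml; apply: ler_sum => i _; rewrite mxE normrM.
  have hai := ha (CD i); have hbj := hb (CD j); rewrite /= in hai hbj.
  by rewrite [`|mdiv a 0 i| * _]mulrC -mulrA ler_wpM2l // ler_pM.
have h1 := ha CR; have h2 := ha CM; have h3 := hb CR; have h4 := hb CM.
rewrite /= in h1 h2 h3 h4.
set S := (_ *m _ *m _) 0 0 in hS *.
have e1 : `|mrank a * mdeg b| <= al * be by rewrite normrM ler_pM.
have e2 : `|mrank b * mdeg a| <= al * be by rewrite normrM mulrC ler_pM.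
rewrite (le_trans (ler_normB _ _)) // (le_trans (lerD (ler_normB _ _) (le_refl _))) //.
rewrite !mulrDl; lra.
Qed.
Lemma sq_gap (X Y E : int) : 0 <= X -> 0 <= Y -> Y ^+ 2 = X ^+ 2 + E -> E != 0 -> X <= `|E|.
Proof.
move=> hX hY h hE.
have [hlt|hge] := ltrP Y X.
  have hy : Y <= X - 1 by lia.
  have h2 : Y * Y <= (X-1) * (X - 1) by nia.
  have hneg : E <= -(2*X) + 1 by rewrite !expr2 in h; nia.
  rewrite ltr0_norm; lia.
have [heq|hne] := eqVneq Y X.
  by move: h hE; rewrite heq => h; have -> : E = 0 by lia.
have hgt : X + 1 <= Y by lia.
have h2 : (X+1) * (X + 1) <= Y * Y by nia.
have hpos : 2*X + 1 <= E by rewrite !expr2 in h; nia.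
rewrite gtr0_norm; lia.
Qed.
Section Key.
Variable n : nat.
Variable G : 'M[int]_n.
Hypothesis sG : G^T = G.
Implicit Types (v w z : mvec int n).

Definition eE : mvec int n := (1, 0, 0).
Definition eF : mvec int n := (0, 0, 1).
Definition ns (g : 'rV[int]_n) : mvec int n := (0, g, 0).

Lemma mk_e z : mukai G eE z = - mdeg z.
Proof. rewrite /mukai /eE /mrank /mdiv /mdeg /= !mul0mx mxE. ring. Qed.
Lemma mk_ze z : mukai G z eE = - mdeg z.
Proof. by rewrite mukaiC // mk_e. Qed.
Lemma mk_f z : mukai G eF z = - mrank z.
Proof. rewrite /mukai /eF /mrank /mdiv /mdeg /= !mul0mx mxE. ring. Qed.
Lemma mk_zf z : mukai G z eF = - mrank z.
Proof. by rewrite mukaiC // mk_f. Qed.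
Lemma mk_ns g z : mukai G (ns g) z = (g *m G *m (mdiv z)^T) 0 0.
Proof. rewrite /mukai /ns /mrank /mdiv /mdeg /=. ring. Qed.
Lemma mk_zns g z : mukai G z (ns g) = (g *m G *m (mdiv z)^T) 0 0.
Proof. by rewrite mukaiC // mk_ns. Qed.

Definition pp (s b : mvec int n) := madd (msc 2 b) (msc (mukai G b s) s).

Lemma bil_of (s u : mvec int n) :
  mukai G s s = -2 -> mukai G u s = 0 ->
  (forall b, mukai G u u * mukai G (pp s b) (pp s b) = (mukai G u (pp s b)) ^+ 2) ->
  forall b b', 2 * mukai G u u * mukai G b b' + mukai G u u * mukai G b s * mukai G b' s
     - 2 * mukai G u b * mukai G u b' = 0.
Proof.
move=> Hs Hus H b b'.
have h1 := H b; have h2 := H b'; have h3 := H (madd b b').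
move: h1 h2 h3; rewrite /pp !(mukaiDl, mukaiDr, mukaiZl, mukaiZr).
rewrite !(mukaiC s b sG) !(mukaiC s b' sG) !(mukaiC b' b sG) Hs Hus.
set U := mukai G u u.
move=> h1 h2 h3. nia.
Qed.
End Key.
Section Key2.
Variable n : nat.
Variable G : 'M[int]_n.
Hypothesis sG : G^T = G.

Lemma entry_delta (i j : 'I_n) :
  (delta_mx (0 : 'I_1) i *m G *m (delta_mx (0 : 'I_1) j)^T) 0 0 = G i j.
Proof.
by rewrite -rowE trmx_delta -colE !mxE.
Qed.

Lemma key_zero (s u : mvec int n) :
  mukai G s s = -2 -> mukai G u s = 0 -> mukai G u u != 0 ->
  (forall b b', 2 * mukai G u u * mukai G b b' + mukai G u u * mukai G b s * mukai G b' s
     - 2 * mukai G u b * mukai G u b' = 0) ->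
  forall i j, G i j = 0.
Proof.
move=> Hs Hus hU B.
set U := mukai G u u in hU B.
set r := mrank s; set m := mdeg s; set ur := mrank u; set um := mdeg u.
have E1 := B (eE n) (eE n). have E2 := B (eF n) (eF n). have E3 := B (eE n) (eF n).
rewrite !(mk_e G, mk_ze sG, mk_f G, mk_zf sG) in E1 E2 E3.
rewrite -/r -/m -/ur -/um /= in E1 E2 E3.
have e0 : mrank (eF n) = 0 by []. rewrite e0 in E2.
have a1 : U * (m * r - 2) = 2 * um * ur by apply/eqP; rewrite -subr_eq0; apply/eqP; rewrite -E3; ring.
have b1 : U * m ^+ 2 = 2 * um ^+ 2 by apply/eqP; rewrite -subr_eq0; apply/eqP; rewrite -E1; ring.
have b2 : U * r ^+ 2 = 2 * ur ^+ 2 by apply/eqP; rewrite -subr_eq0; apply/eqP; rewrite -E2; ring.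
have hA : (U * (m * r - 2)) ^+ 2 = (U * m ^+ 2) * (U * r ^+ 2) by rewrite a1 b1 b2; ring.
have hmr : m * r = 1.
  have h0 : U ^+ 2 * (4 * (1 - m * r)) = (U * (m * r - 2)) ^+ 2 - (U * m ^+ 2) * (U * r ^+ 2) by ring.
  rewrite hA subrr in h0.
  move/eqP: h0; rewrite mulf_eq0 expf_eq0 /= (negbTE hU) /= => /eqP h0.
  by move/eqP: h0; rewrite mulf_eq0 /= subr_eq0 => /eqP ->.
have F : forall g g', mukai G (ns g) (ns g') = - (mukai G (ns g) s * mukai G (ns g') s).
  move=> g g'.
  have E4 := B (eE n) (ns g); have E5 := B (eF n) (ns g'); have E6 := B (ns g) (ns g').
  rewrite !(mk_e G) !(mk_ze sG) in E4. rewrite !(mk_f G) !(mk_zf sG) in E5.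
  have z1 : mdeg (ns g) = 0 by []. have z2 : mrank (ns g') = 0 by [].
  rewrite z1 -/m -/um in E4. rewrite z2 -/r -/ur in E5.
  move: E4 E5 E6.
  set A := mukai G (ns g) (ns g'); set X := mukai G (ns g) s; set X' := mukai G (ns g') s.
  set P := mukai G u (ns g); set P' := mukai G u (ns g').
  move=> E4 E5 E6.
  have d4 : 2 * um * P = U * m * X by apply/eqP; rewrite -subr_eq0; apply/eqP; rewrite -E4; ring.
  have d5 : 2 * ur * P' = U * r * X' by apply/eqP; rewrite -subr_eq0; apply/eqP; rewrite -E5; ring.
  have d6 : 2 * P * P' = 2 * U * A + U * X * X' by apply/eqP; rewrite eq_sym -subr_eq0; apply/eqP; rewrite -E6; ring.
  have c1 : (2 * um * ur) * (2 * P * P') = (2 * um * P) * (2 * ur * P') by ring.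
  rewrite d4 d5 d6 -a1 in c1.
  have e : (U * m * X) * (U * r * X') = U^+2 * X * X' * (m * r) by ring.
  rewrite e hmr in c1.
  have h : U^+2 * (2 * (A+X * X')) = U^+2 * X * X' * 1 - U * (1-2) * (2 * U * A+U * X * X') by ring.
  rewrite -c1 subrr in h.
  move/eqP: h; rewrite mulf_eq0 expf_eq0 /= (negbTE hU) /= mulf_eq0 /= addr_eq0.
  by move/eqP.
have Xs : forall g, mukai G (ns g) s = mukai G (ns g) (ns (mdiv s)) by move=> g; rewrite !(mk_ns G).
have hh : mukai G (ns (mdiv s)) (ns (mdiv s)) = 0.
  rewrite (mk_ns G); move: Hs; rewrite /mukai -/r -/m /= => Hs.
  apply/eqP; rewrite -subr_eq0; apply/eqP; rewrite -(subrr (-2)) -{1}Hs.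
  have -> : r * m = m * r by rewrite mulrC.
  rewrite hmr; ring.
have X0 : forall g, mukai G (ns g) s = 0.
  move=> g; rewrite Xs F (Xs (mdiv s)) hh; ring.
move=> i j; rewrite -entry_delta.
have -> : (delta_mx (0 : 'I_1) i *m G *m (delta_mx (0 : 'I_1) j)^T) 0 0
   = mukai G (ns (delta_mx 0 i)) (ns (delta_mx 0 j)) by rewrite (mk_ns G).
rewrite F !X0; ring.
Qed.

End Key2.
Lemma int_part (U P B T c : int) :
  1 <= U -> 2 * `|B| + `|T| + 4 * `|U * T - B ^+ 2| < P ->
  U * T - B ^+ 2 != 0 -> 2 * U = c ^+ 2 ->
  0 < P ^+ 2 * U + 2 * P * B + T /\ ~ is_int_square (2 * (P ^+ 2 * U + 2 * P * B + T)).
Proof.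
move=> hU hP hD hc.
set D := U * T - B ^+ 2 in hP hD.
have aB : - `|B| <= B by rewrite lerNnormlW.
have aT : - `|T| <= T by rewrite lerNnormlW.
have nB : 0 <= `|B| by []. have nT : 0 <= `|T| by []. have nD : 0 <= `|D| by [].
have P1 : 1 <= P by lia.
split.
  have h1 : P * P <= P ^+ 2 * U by rewrite expr2 -{1}[P * P]mulr1 ler_wpM2l // mulr_ge0 //; lia.
  have h2 : P * (2 * `|B| + `|T| + 1) <= P * P by rewrite ler_wpM2l //; lia.
  have h3 : (2 * P) * (- `|B|) <= (2 * P) * B by rewrite ler_wpM2l //; lia.
  have h4 : `|T| * 1 <= `|T| * P by rewrite ler_wpM2l.
  lia.
move=> [k hk].
set X := 2 * U * P + 2 * B.
have hUP : P <= U * P by rewrite -{1}[P]mul1r ler_wpM2r //; lia.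
have hX0 : 0 <= X by rewrite /X; lia.
have hXD : 4 * `|D| < X by rewrite /X; lia.
have hY : (`|c * k|) ^+ 2 = X ^+ 2 + 4 * D.
  rewrite real_normK ?num_real // exprMn -hc -hk /X /D. ring.
have h4 : 4 * D != 0 by rewrite mulf_eq0 negb_or hD.
have := sq_gap hX0 (normr_ge0 _) hY h4.
rewrite normrM. lia.
Qed.
Definition mnorm (R : realType) n (v : mvec R n) : R :=
  `|mrank v| + `|mdeg v| + \sum_i `|mdiv v 0 i|.

Lemma mnorm_ge0 (R : realType) n (v : mvec R n) : 0 <= mnorm v.
Proof. rewrite /mnorm !addr_ge0 //; apply: sumr_ge0 => i _; exact: normr_ge0. Qed.

Lemma coord_le_mnorm (R : realType) n (v : mvec R n) k : `|coord v k| <= mnorm v.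
Proof.
have hs : 0 <= \sum_i `|mdiv v 0 i| by apply: sumr_ge0 => i _; exact: normr_ge0.
rewrite /mnorm; case: k => [|i|] /=.
- have := normr_ge0 (mdeg v); lra.
- rewrite (bigD1 i) //=; set S := \sum_(j | _) _.
  have : 0 <= S by apply: sumr_ge0 => j _; exact: normr_ge0.
  have := normr_ge0 (mdeg v); have := normr_ge0 (mrank v); lra.
- have := normr_ge0 (mrank v); lra.
Qed.

Lemma mvec_ext (T : Type) n (v w : mvec T n) :
  (forall k, coord v k = coord w k) -> v = w.
Proof.
case: v => [[r c] m]; case: w => [[r' c'] m'] h.
have h1 := h CR; have h2 := h CM; rewrite /= /mrank /mdeg /= in h1 h2.
rewrite h1 h2; congr (_, _, _).
apply/matrixP => i j; rewrite (ord1 i); exact: (h (CD j)).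
Qed.

Lemma mscale_msc (R : realType) n (a : R) (v : mvec R n) : mscale a v = msc a v.
Proof. by []. Qed.

Lemma mukai_sym_real (R : realType) n (G : 'M[int]_n) :
  G^T = G -> (map_mx (fun z : int => z%:~R : R) G)^T = map_mx (fun z : int => z%:~R : R) G.
Proof. by move=> sG; rewrite map_trmx sG. Qed.
Lemma floor_approx (R : realType) (N z : R) : 0 < N ->
  `|(Num.floor (N * z))%:~R / N - z| <= 1 / N.
Proof.
move=> hN.
set f := Num.floor (N * z).
have h1 : (f%:~R : R) <= N * z by exact: floor_le_tmp.
have h2 : N * z < (f + 1)%:~R by exact: floorD1_gt.
rewrite intrD in h2.
have -> : (f%:~R : R) / N - z = (f%:~R - N * z) / N by field; apply: lt0r_neq0.
rewrite normrM normfV (gtr0_norm hN) ler_pdivrMr // divfK; last exact: lt0r_neq0.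
rewrite ler_norml; apply/andP; split; lra.
Qed.
Lemma approx (R : realType) n (G : 'M[int]_n) (sG : G^T = G) (s : mvec int n)
  (Hs : mukai G s s = -2) (x : mvec R n) :
  mukai (map_mx (fun z : int => z%:~R) G) x (mreal R s) = 0 ->
  0 < mukai (map_mx (fun z : int => z%:~R) G) x x -> forall eps : R, 0 < eps ->
  exists (u : mvec int n) (lam : R), [/\ mukai G u s = 0, 0 < mukai G u u, 0 < lam &
     forall k, `|lam * (coord u k)%:~R - coord x k| < eps].
Proof.
set Gr := map_mx _ G => Hxs Hq eps heps.
have sGr : Gr^T = Gr by exact: mukai_sym_real.
set q := mukai Gr x x in Hq.
set C := Cg Gr; set Mx := mnorm x; set Ms := mnorm (mreal R s).
have C2 : 2 <= C by exact: Cg_ge2.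
have Mx0 : 0 <= Mx by exact: mnorm_ge0.
have Ms0 : 0 <= Ms by exact: mnorm_ge0.
have CM0 : 0 < C * (2 * Mx + 1) by apply: mulr_gt0; lra.
set mn := Num.min (Num.min eps 1) (q / (C * (2 * Mx + 1))).
have mn0 : 0 < mn by rewrite !lt_min heps ltr01 divr_gt0.
have mne : mn <= eps by rewrite !ge_min lexx.
have mn1 : mn <= 1 by rewrite !ge_min lexx orbT.
have mnq : mn <= q / (C * (2 * Mx + 1)) by rewrite !ge_min lexx orbT.
set K1 := 1 + C * Ms * Ms.
have K10 : 1 <= K1 by rewrite /K1 lerDl !mulr_ge0 //; lra.
set delta := mn / 2 / K1.
have d0 : 0 < delta by rewrite /delta !divr_gt0 //; lra.
set N := (Num.bound (1 / delta)).+1.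
set NR : R := N%:R.
have NR0 : 0 < NR by rewrite /NR ltr0n.
have hNd : 1 / NR < delta.
  have h := archi_boundP (ltW (divr_gt0 ltr01 d0)).
  have h' : 1 / delta < NR by rewrite /NR /N (lt_le_trans h) // ler_nat.
  rewrite ltr_pdivrMr //.
  have : delta * (1 / delta) < delta * NR by rewrite ltr_pM2l.
  by rewrite mulrC divfK // lt0r_neq0.
set dl := 1 / NR.
have dl0 : 0 < dl by rewrite /dl divr_gt0.
set w : mvec int n := (Num.floor (NR * mrank x), \row_i Num.floor (NR * mdiv x 0 i),
   Num.floor (NR * mdeg x)).
have cw : forall k, coord w k = Num.floor (NR * coord x k) by case => [|i|] //=; rewrite mxE.
set u := pp G s w.
have hus : mukai G u s = 0.
by rewrite /u /pp mukaiDl !(mukaiZl (T := int)) Hs; ring.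
set zR := msc (1 / NR) (mreal R w).
set d := madd zR (msc (-1) x).
have cd : forall k, `|coord d k| <= dl.
  move=> k; rewrite /d coord_add !coord_sc coord_real cw mulN1r mulrC mul1r.
  exact: floor_approx.
set dS := mukai Gr d (mreal R s).
have dSe : dS = (1 / NR) * (mukai G w s)%:~R.
  by rewrite /dS /d mukaiDl !mukaiZl Hxs mukai_mreal; ring.
have dSb : `|dS| <= C * dl * Ms.
  exact: (mukai_bound Gr (ltW dl0) Ms0 cd (coord_le_mnorm _)).
set lam := 1 / (2 * NR).
have lam0 : 0 < lam by rewrite /lam divr_gt0 // mulr_gt0.
set y := msc lam (mreal R u).
set e := madd y (msc (-1) x).
have ce : forall k, coord e k = coord d k + dS / 2 * coord (mreal R s) k.
  move=> k; rewrite /e coord_add !coord_sc !coord_real /u /pp (coord_add (T := int)) !(coord_sc (T := int)) intrD !intrM.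
  rewrite /d /zR coord_add !coord_sc coord_real dSe /lam.
  by field; apply: lt0r_neq0.
set et := dl * K1.
have ceb : forall k, `|coord e k| <= et.
  move=> k; rewrite ce.
  have a := cd k; have b := coord_le_mnorm (mreal R s) k.
  have c : `|dS / 2 * coord (mreal R s) k| <= (C * dl * Ms * Ms) / 2.
    rewrite normrM normrM (normfV (2 : R)) normr_nat.
    rewrite (_ : C * dl * Ms * Ms / 2 = C * dl * Ms / 2 * Ms); last by field.
    rewrite ler_pM //.
      by rewrite mulr_ge0 // invr_ge0.
    by rewrite ler_pM2r // invr_gt0.
  have c0 : 0 <= C * dl * Ms * Ms.
  rewrite !mulr_ge0 // ?invr_ge0 ?(ltW NR0) //; lra.
  rewrite (le_trans (ler_normD _ _)) // /et /K1.
  have -> : dl * (1 + C * Ms * Ms) = dl + C * dl * Ms * Ms by ring.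
  lra.
have et0 : 0 <= et by rewrite /et mulr_ge0 //; lra.
have etm : et < mn / 2.
  by rewrite /et -ltr_pdivlMr ?(lt_le_trans ltr01 K10).
have ete : et < eps by lra.
have et1 : et <= 1 by lra.
have etq : C * (2 * Mx + 1) * et < q.
  have h1 : mn * (C * (2 * Mx + 1)) <= q by rewrite -ler_pdivlMr.
  have h2 : et * (C * (2 * Mx + 1)) < mn * (C * (2 * Mx + 1)) by rewrite ltr_pM2r //; lra.
  rewrite mulrC; exact: (lt_le_trans h2 h1).
have yxe : y = madd x e by apply: mvec_ext => k; rewrite coord_add /e coord_add coord_sc; ring.
have Qy : mukai Gr y y = q + 2 * mukai Gr x e + mukai Gr e e.
  have bil : forall a b : mvec R n, mukai Gr (madd a b) (madd a b)
     = mukai Gr a a + 2 * mukai Gr a b + mukai Gr b b.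
    by move=> a b; rewrite mukaiDl !mukaiDr (mukaiC b a sGr); ring.
  by rewrite yxe bil.
have b1 : `|mukai Gr x e| <= C * Mx * et := mukai_bound Gr Mx0 et0 (coord_le_mnorm x) ceb.
have b2 : `|mukai Gr e e| <= C * et * et := mukai_bound Gr et0 et0 ceb ceb.
have b3 : C * et * et <= C * et by rewrite -{2}[C * et]mulr1 ler_wpM2l // mulr_ge0 //; lra.
have Qpos : 0 < mukai Gr y y.
  rewrite Qy; move: b1 b2; rewrite !ler_norml => /andP[b1 b1'] /andP[b2 b2'].
  have ee : C * (2 * Mx + 1) * et = 2 * (C * Mx * et) + C * et by ring.
  rewrite ee in etq.
  lra.
have Upos : 0 < mukai G u u.
  move: Qpos; rewrite /y mukaiZl mukaiZr mukai_mreal.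
  by rewrite pmulr_rgt0 // pmulr_rgt0 // ltr0z.
exists u, lam; split => // k.
have := ceb k; rewrite /e coord_add !coord_sc coord_real mulN1r => h.
exact: (le_lt_trans h ete).
Qed.
Lemma hyp_nz (R : realType) n (G : 'M[int]_n) : (0 < n)%N -> hyperbolic_signature R G ->
  ~ (forall i j, G i j = 0).
Proof.
move=> hn [P [_ hP]] h0.
have : map_mx (fun z : int => z%:~R : R) G = 0 by apply/matrixP => i j; rewrite !mxE h0.
move=> e; rewrite e mulmx0 mul0mx in hP.
have := congr1 (fun M : 'M[R]_n => M (Ordinal hn) (Ordinal hn)) hP.
by rewrite /= !mxE eqxx /= mulr1n => /eqP; rewrite eq_sym oner_eq0.
Qed.

Theorem lemmaA3 (R : realType) (n : nat) (G : 'M[int]_n) :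
  (0 < n <= 20)%N ->
  even_lattice G ->
  hyperbolic_signature R G ->
  forall s : mvec int n, mukai G s s = -2 ->
  forall x : mvec R n,
    mukai (map_mx (fun z : int => z%:~R) G) x (mreal R s) = 0 ->
    0 < mukai (map_mx (fun z : int => z%:~R) G) x x ->
  forall eps : R, 0 < eps ->
  exists (v : mvec int n) (lam : R),
    [/\ mukai G v s = 0,
        0 < mukai G v v,
        ~ is_int_square (2 * mukai G v v),
        0 < lam
      & mclose eps (mscale lam (mreal R v)) x].
Proof.
move=> /andP[hn _] [sG _] hyp s Hs x Hxs Hq eps heps.
have heps2 : 0 < eps / 2 by rewrite divr_gt0.
have [u [lam [hus hU hlam hcl]]] := approx sG Hs Hxs Hq heps2.
set U := mukai G u u in hU.
case: (classic (is_int_square (2 * U))) => hsq; last first.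
  exists u, lam; split => //.
  apply: mcloseP => k; rewrite mscale_msc coord_sc coord_real.
  have := hcl k; lra.
case: hsq => c hc.
have Gnz := hyp_nz hn hyp.
have [b hb] : exists b, U * mukai G (pp G s b) (pp G s b) != (mukai G u (pp G s b)) ^+ 2.
  case: (classic (exists b, U * mukai G (pp G s b) (pp G s b) != (mukai G u (pp G s b)) ^+ 2)) => // hne.
  exfalso; apply: Gnz; apply: (key_zero sG Hs hus); first by rewrite lt0r_neq0.
  apply: (bil_of sG Hs hus) => b.
  case: (eqVneq (U * mukai G (pp G s b) (pp G s b)) (mukai G u (pp G s b) ^+ 2)) => // h.
  by exfalso; apply: hne; exists b.
set t := pp G s b in hb.
have hts : mukai G t s = 0 by rewrite /t /pp mukaiDl !(mukaiZl (T := int)) Hs; ring.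
clearbody t.
set B := mukai G u t in hb; set T := mukai G t t in hb.
have hD : U * T - B ^+ 2 != 0 by rewrite subr_eq0.
set Mt := mnorm (mreal R t).
have Mt0 : 0 <= Mt by exact: mnorm_ge0.
set Ki : int := 2 * `|B| + `|T| + 4 * `|U * T - B ^+ 2|.
have Ki0 : 0 <= Ki by rewrite /Ki; lia.
set K0 : R := Ki%:~R + 2 * lam * Mt / eps.
have K00 : 0 <= K0.
  rewrite /K0 addr_ge0 // ?ler0z // divr_ge0 ?(ltW heps) // !mulr_ge0 // ltW //.
set P := Num.bound K0.
have hPK := archi_boundP K00.
have PR : (P%:Z)%:~R = (P%:R : R) by rewrite -pmulrn.
have hPi : Ki < P%:Z.
  rewrite -(ltr_int R) PR; apply: le_lt_trans hPK.
  rewrite /K0 lerDl divr_ge0 ?(ltW heps) // !mulr_ge0 // ltW //.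
have hPR : 2 * lam * Mt / eps < P%:R.
  apply: le_lt_trans hPK; rewrite /K0 lerDr ler0z //.
have P0 : (0 < P%:R :> R) by rewrite -PR ltr0z; lia.
have [vpos vns] := int_part (c := c) (U := U) (P := P%:Z) (B := B) (T := T) (ltac:(lia)) hPi hD hc.
set v := madd (msc (P%:Z) u) t.
have hvs : mukai G v s = 0 by rewrite /v mukaiDl (mukaiZl (T := int)) hus hts; ring.
have hvv : mukai G v v = P%:Z ^+ 2 * U + 2 * P%:Z * B + T.
  rewrite /v mukaiDl !mukaiDr !(mukaiZl (T := int)) !(mukaiZr (T := int)) (mukaiC t u sG).
  rewrite /U /B /T; ring.
exists v, (lam / P%:R); split => //; first by rewrite hvv.
- by rewrite hvv.
- by rewrite divr_gt0.
apply: mcloseP => k; rewrite mscale_msc coord_sc coord_real /v (coord_add (T := int)) (coord_sc (T := int)).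
rewrite intrD intrM PR.
have e1 : lam / P%:R * (P%:R * (coord u k)%:~R + (coord t k)%:~R) - coord x k
   = (lam * (coord u k)%:~R - coord x k) + lam / P%:R * (coord t k)%:~R.
  by field; rewrite lt0r_neq0.
rewrite e1 (le_lt_trans (ler_normD _ _)) //.
have h1 := hcl k.
have h2 : `|lam / P%:R * (coord t k)%:~R| <= lam * Mt / P%:R.
  rewrite normrM gtr0_norm ?divr_gt0 // mulrAC ler_pM2r ?invr_gt0 // ler_pM2l //.
  by have := coord_le_mnorm (mreal R t) k; rewrite coord_real.
have h3 : lam * Mt / P%:R < eps / 2.
  rewrite ltr_pdivrMr //.
  move: hPR; rewrite ltr_pdivrMr //. lra.
lra.
Qed.
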